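(* For each $i=1,\dots,n$, the function $x\mapsto W^{z^\ast}(x,c_i)$ is continuously differentiable on $(0,\infty)$. Moreover, if $z^\ast(c_i)>0$, then the right second derivative at $z^\ast(c_i)$ is at least the left one: $\partial_{xx}W^{z^\ast}(z^\ast(c_i)^+,c_i)\ge\partial_{xx}W^{z^\ast}(z^\ast(c_i)^-,c_i)$.
   Context: Let $\mu\in\mathbb R$, $\sigma>0$, $q>0$, $\Lambda>0$ and $S=\{c_0,c_1,\dots,c_n\}$ with $0=c_0<c_1<\dots<c_n$. For $c\ge0$, $\theta_1(c)=\frac{c-\mu-\sqrt{(c-\mu)^2+2q\sigma^2}}{\sigma^2}<0$. Define recursively $W^{z^\ast}(x,c_0)=\frac{\Lambda}{q}(1-e^{\theta_1(0)x})$ for $x\ge0$, and for $i\ge1$: $G_i(y)=\Big(1-\frac{q}{c_i+\Lambda}W^{z^\ast}(y,c_{i-1})\Big)e^{-\theta_1(c_i)y}$ for $y\ge0$, $z^\ast(c_i)=\min\big(\arg\min_{y\ge0}G_i(y)\big)$, $a^\ast(c_i)=G_i(z^\ast(c_i))$, and $W^{z^\ast}(x,c_i)=W^{z^\ast}(x,c_{i-1})$ for $0\le x\le z^\ast(c_i)$, $W^{z^\ast}(x,c_i)=\frac{c_i+\Lambda}{q}\big(1-a^\ast(c_i)e^{\theta_1(c_i)x}\big)$ for $x>z^\ast(c_i)$. (This is the value of the optimal multi-threshold emission strategy.) *)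

(* Defs.v *)
From Stdlib Require Import Reals.
From Coquelicot Require Import Coquelicot.
Open Scope R_scope.

Definition theta1 (mu sigma q c : R) : R :=
  (c - mu - sqrt ((c - mu) ^ 2 + 2 * q * sigma ^ 2)) / sigma ^ 2.

Definition Gfun (mu sigma q Lambda : R) (Wprev : R -> R) (ci : R) (y : R) : R :=
  (1 - q / (ci + Lambda) * Wprev y) * exp (- theta1 mu sigma q ci * y).

Definition argmin_set (G : R -> R) (y : R) : Prop :=
  0 <= y /\ (forall y', 0 <= y' -> G y <= G y').

(* min (argmin_{y>=0} G): the infimum of the set of minimisers (it is the
   minimum whenever the argmin set is nonempty and closed, e.g. G continuous). *)
Definition argmin_min (G : R -> R) : R := real (Glb_Rbar (argmin_set G)).

(* W^{z*}(., c_i), with c : nat -> R encoding S = {c_0,...,c_n} *)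
Fixpoint Wz (mu sigma q Lambda : R) (c : nat -> R) (i : nat) : R -> R :=
  match i with
  | O => fun x => Lambda / q * (1 - exp (theta1 mu sigma q 0 * x))
  | S j =>
      let Wprev := Wz mu sigma q Lambda c j in
      let G := Gfun mu sigma q Lambda Wprev (c (S j)) in
      let z := argmin_min G in
      let a := G z in
      fun x => if Rle_dec x z then Wprev x
               else (c (S j) + Lambda) / q * (1 - a * exp (theta1 mu sigma q (c (S j)) * x))
  end.

(* z*(c_i) for i >= 1 (value at i = 0 is an irrelevant default 0) *)
Definition zstar (mu sigma q Lambda : R) (c : nat -> R) (i : nat) : R :=
  match i with
  | O => 0
  | S j => argmin_min (Gfun mu sigma q Lambda (Wz mu sigma q Lambda c j) (c (S j)))
  end.

(* Main.v *)
Require Import Defs.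
From Stdlib Require Import Reals Lra Lia Classical.
From Coquelicot Require Import Coquelicot.
Open Scope R_scope.

Lemma cont_eps f x : continuity_pt f x ->
  forall eps, 0 < eps -> exists a, 0 < a /\ forall y, Rabs (y - x) < a -> Rabs (f y - f x) < eps.
Proof.
  intros H eps Heps. destruct (H eps Heps) as [a [Ha H2]].
  exists a; split; auto. intros y Hy.
  destruct (Req_dec y x) as [->|Hne].
  - rewrite Rminus_diag, Rabs_R0; auto.
  - apply (H2 y). split. split; [exact I| auto]. exact Hy.
Qed.

Lemma eps_cont f x : (forall eps, 0 < eps -> exists a, 0 < a /\ forall y, Rabs (y - x) < a -> Rabs (f y - f x) < eps) -> continuity_pt f x.
Proof.
  intros H eps Heps. destruct (H eps Heps) as [a [Ha H2]].
  exists a; split; auto. intros y [_ Hy]. apply H2. exact Hy.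
Qed.

Lemma glue_cont f g1 g2 z d : 0 < d ->
  (forall y, z - d < y <= z -> f y = g1 y) -> (forall y, z <= y < z + d -> f y = g2 y) ->
  continuity_pt g1 z -> continuity_pt g2 z -> continuity_pt f z.
Proof.
  intros Hd H1 H2 C1 C2. apply eps_cont. intros eps He.
  destruct (cont_eps _ _ C1 eps He) as [a1 [Ha1 K1]].
  destruct (cont_eps _ _ C2 eps He) as [a2 [Ha2 K2]].
  exists (Rmin d (Rmin a1 a2)). split. repeat apply Rmin_pos; auto.
  intros y Hy. pose proof (Rmin_l d (Rmin a1 a2)). pose proof (Rmin_r d (Rmin a1 a2)).
  pose proof (Rmin_l a1 a2). pose proof (Rmin_r a1 a2).
  apply Rabs_def2 in Hy. destruct Hy as [Hy1 Hy2].
  destruct (Rle_dec y z).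
  - rewrite (H1 y) by lra. rewrite (H1 z) by lra. apply K1. apply Rabs_def1; lra.
  - rewrite (H2 y) by lra. rewrite (H2 z) by lra. apply K2. apply Rabs_def1; lra.
Qed.

Lemma glue_deriv f g1 g2 z d l : 0 < d ->
  (forall y, z - d < y <= z -> f y = g1 y) -> (forall y, z <= y < z + d -> f y = g2 y) ->
  derivable_pt_lim g1 z l -> derivable_pt_lim g2 z l -> derivable_pt_lim f z l.
Proof.
  intros Hd H1 H2 D1 D2 eps He.
  destruct (D1 eps He) as [a1 K1]. destruct (D2 eps He) as [a2 K2].
  assert (Hp : 0 < Rmin d (Rmin a1 a2)) by (repeat apply Rmin_pos; auto; apply cond_pos).
  exists (mkposreal _ Hp). simpl. intros h Hh Hlt.
  pose proof (Rmin_l d (Rmin a1 a2)). pose proof (Rmin_r d (Rmin a1 a2)).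
  pose proof (Rmin_l a1 a2). pose proof (Rmin_r a1 a2).
  pose proof (Rabs_def2 _ _ Hlt) as [Hy1 Hy2].
  destruct (Rle_dec h 0).
  - rewrite (H1 (z+h)) by lra. rewrite (H1 z) by lra. apply K1; auto. apply Rabs_def1; lra.
  - rewrite (H2 (z+h)) by lra. rewrite (H2 z) by lra. apply K2; auto. apply Rabs_def1; lra.
Qed.

Lemma left_lim_eq f g z d : 0 < d -> continuity_pt f z -> continuity_pt g z ->
  (forall y, z - d < y < z -> f y = g y) -> f z = g z.
Proof.
  intros Hd Cf Cg H. destruct (Req_dec (f z) (g z)) as [E|Ne]; auto. exfalso.
  assert (He : 0 < Rabs (f z - g z) / 2). { apply Rdiv_lt_0_compat; [|lra]. apply Rabs_pos_lt. lra. }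
  destruct (cont_eps _ _ Cf _ He) as [a1 [Ha1 K1]].
  destruct (cont_eps _ _ Cg _ He) as [a2 [Ha2 K2]].
  set (m := Rmin d (Rmin a1 a2)).
  assert (0 < m) by (repeat apply Rmin_pos; auto).
  pose proof (Rmin_l d (Rmin a1 a2)). pose proof (Rmin_r d (Rmin a1 a2)).
  pose proof (Rmin_l a1 a2). pose proof (Rmin_r a1 a2).
  set (y := z - m/2).
  assert (A1 : Rabs (f y - f z) < Rabs (f z - g z) / 2) by (apply K1; apply Rabs_def1; unfold y, m in *; lra).
  assert (A2 : Rabs (g y - g z) < Rabs (f z - g z) / 2) by (apply K2; apply Rabs_def1; unfold y, m in *; lra).
  rewrite (H y) in A1 by (unfold y, m in *; lra).
  assert (Rabs (f z - g z) <= Rabs (g y - f z) + Rabs (g y - g z)).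
  { replace (f z - g z) with (-(g y - f z) + (g y - g z)) by ring.
    eapply Rle_trans. apply Rabs_triang. rewrite Rabs_Ropp. lra. }
  lra.
Qed.

Lemma loc_open (P : R -> Prop) a b x : a < x < b -> (forall t, a < t < b -> P t) -> locally x P.
Proof.
  intros Hx H. apply (locally_interval P x a b); simpl; try lra. intros y H1 H2; apply H; simpl in *; lra.
Qed.

Lemma deriv_open f g a b : (forall t, a < t < b -> f t = g t) -> forall x, a < x < b -> Derive f x = Derive g x.
Proof.
  intros H x Hx. apply Derive_ext_loc. apply (loc_open _ a b); auto.
Qed.

Lemma second_order_left h h1 h2 z d : 0 < d ->
  (forall y, derivable_pt_lim h y (h1 y)) -> (forall y, derivable_pt_lim h1 y (h2 y)) ->
  continuity_pt h2 z -> h1 z = 0 -> (forall y, z - d < y < z -> h z <= h y) -> 0 <= h2 z.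
Proof.
  intros Hd D1 D2 C Z Hm. destruct (Rle_lt_dec 0 (h2 z)) as [|Hn]; auto. exfalso.
  assert (He : 0 < - h2 z) by lra.
  destruct (cont_eps _ _ C _ He) as [a [Ha K]].
  set (m := Rmin d a). assert (0 < m) by (apply Rmin_pos; auto).
  pose proof (Rmin_l d a). pose proof (Rmin_r d a).
  set (y := z - m/2).
  destruct (MVT_cor2 h h1 y z) as [xi [E1 Hxi]]. unfold y; lra. intros; apply D1.
  destruct (MVT_cor2 h1 h2 xi z) as [eta [E2 Heta]]. lra. intros; apply D2.
  assert (h2 eta < 0).
  { assert (HH : Rabs (h2 eta - h2 z) < - h2 z) by (apply K; apply Rabs_def1; unfold y, m in *; lra).
    apply Rabs_def2 in HH. lra. }
  assert (h1 xi > 0). { rewrite Z in E2. assert (h2 eta * (z - xi) < 0). apply Rmult_neg_pos; lra. lra. }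
  assert (h z - h y > 0). { rewrite E1. apply Rmult_gt_0_compat; unfold y in *; lra. }
  assert (h z <= h y) by (apply Hm; unfold y, m in *; lra). lra.
Qed.

Lemma ext_open_C1 f g a b x : (forall t, a < t < b -> f t = g t) -> a < x < b ->
  ex_derive g x -> continuity_pt (Derive g) x -> ex_derive f x /\ continuity_pt (Derive f) x.
Proof.
  intros H Hx D C. split.
  - apply (ex_derive_ext_loc g). apply (loc_open _ a b); auto. intros; symmetry; auto. auto.
  - apply continuity_pt_filterlim. apply continuity_pt_filterlim in C.
    rewrite (deriv_open f g a b H x Hx).
    apply (filterlim_ext_loc (Derive g)); auto.
    apply (loc_open _ a b); auto. intros; symmetry; apply (deriv_open f g a b); auto.
Qed.

Lemma left_filterlim f g z d : 0 < d -> (forall y, z - d < y < z -> f y = g y) ->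
  continuity_pt g z -> filterlim f (at_left z) (locally (g z)).
Proof.
  intros Hd H C. apply (filterlim_ext_loc g).
  - unfold at_left, within. apply (loc_open _ (z - d) (z + d)). lra. intros t Ht Hl. symmetry; apply H; lra.
  - apply (filterlim_filter_le_1 (F := locally z)).
    + intros P HP. unfold at_left, within. eapply filter_imp; [|exact HP]. auto.
    + apply continuity_pt_filterlim; auto.
Qed.

Lemma right_filterlim f g z d : 0 < d -> (forall y, z < y < z + d -> f y = g y) ->
  continuity_pt g z -> filterlim f (at_right z) (locally (g z)).
Proof.
  intros Hd H C. apply (filterlim_ext_loc g).
  - unfold at_right, within. apply (loc_open _ (z - d) (z + d)). lra. intros t Ht Hl. symmetry; apply H; lra.
  - apply (filterlim_filter_le_1 (F := locally z)).
    + intros P HP. unfold at_right, within. eapply filter_imp; [|exact HP]. auto.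
    + apply continuity_pt_filterlim; auto.
Qed.

Lemma argmin_ok G : 0 < argmin_min G -> continuity_pt G (argmin_min G) ->
  forall y, 0 <= y -> G (argmin_min G) <= G y.
Proof.
  unfold argmin_min. destruct (Glb_Rbar_correct (argmin_set G)) as [Hlb Hglb].
  destruct (Glb_Rbar (argmin_set G)) as [z| |]; simpl; try lra.
  intros Hz C y Hy. destruct (Rle_lt_dec (G z) (G y)) as [|Hlt]; auto. exfalso.
  assert (He : 0 < G z - G y) by lra.
  destruct (cont_eps _ _ C _ He) as [a [Ha K]].
  destruct (classic (exists w, argmin_set G w /\ w < z + a)) as [[w [Hw Hwa]]|Hn].
  - pose proof (Hlb w Hw) as Hzw. simpl in Hzw.
    destruct Hw as [Hw0 Hw1]. specialize (Hw1 y Hy).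
    assert (HH : Rabs (G w - G z) < G z - G y) by (apply K; apply Rabs_def1; lra).
    apply Rabs_def2 in HH. lra.
  - assert (Rbar_le (z + a) z).
    { apply Hglb. intros w Hw. simpl. destruct (Rle_lt_dec (z + a) w) as [|Hl]; auto.
      exfalso; apply Hn; exists w; auto. }
    simpl in H. lra.
Qed.

Definition Inv (W : R -> R) : Prop :=
 (forall x, 0 < x -> ex_derive W x /\ continuity_pt (Derive W) x) /\
 (forall x, 0 < x -> exists d A B s, 0 < d /\ forall y, x - d < y <= x -> W y = A + B * exp (s * y)).

Lemma exp_C1 K a t x : ex_derive (fun y => K * (1 - a * exp (t * y))) x /\
   continuity_pt (Derive (fun y => K * (1 - a * exp (t * y)))) x.
Proof.
  split. auto_derive; auto.
  apply (continuity_pt_ext (fun y => - (K * a * t * exp (t * y)))).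
  - intros y. symmetry. apply is_derive_unique. auto_derive; auto. ring.
  - apply continuity_pt_filterlim. apply (ex_derive_continuous (fun y => - (K * a * t * exp (t * y)))). auto_derive; auto.
Qed.

Lemma step mu sigma q Lambda Wp ci : 0 < q -> 0 < ci + Lambda -> Inv Wp ->
 let G := Gfun mu sigma q Lambda Wp ci in
 let z := argmin_min G in
 let W := fun x => if Rle_dec x z then Wp x
    else (ci + Lambda) / q * (1 - G z * exp (theta1 mu sigma q ci * x)) in
 Inv W /\
    (0 < z ->
      exists lminus lplus : R,
        (exists del : posreal, forall x, z - del < x < z -> ex_derive (Derive W) x) /\
        (exists del : posreal, forall x, z < x < z + del -> ex_derive (Derive W) x) /\
        filterlim (fun x => Derive (Derive W) x) (at_left z) (locally lminus) /\
        filterlim (fun x => Derive (Derive W) x) (at_right z) (locally lplus) /\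
        lminus <= lplus).
Proof.
  intros Hq Hc [I1 I2] G z W.
  set (K := (ci + Lambda) / q). set (r := q / (ci + Lambda)).
  set (th := theta1 mu sigma q ci). set (a := G z).
  set (gN := fun y => K * (1 - a * exp (th * y))).
  assert (Kr : K * r = 1) by (unfold K, r; field; lra).
  assert (HK : 0 < K) by (unfold K; apply Rdiv_lt_0_compat; lra).
  assert (Gdef : forall y, G y = (1 - r * Wp y) * exp (- th * y)) by reflexivity.
  assert (Wl : forall y, y <= z -> W y = Wp y).
  { intros y Hy. unfold W. destruct (Rle_dec y z); [auto|lra]. }
  assert (Wr : forall y, z < y -> W y = gN y).
  { intros y Hy. unfold W. destruct (Rle_dec y z); [lra|reflexivity]. }
  assert (gNz : gN z = Wp z).
  { unfold gN, a. rewrite Gdef. rewrite Rmult_assoc, <- exp_plus.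
    replace (- th * z + th * z) with 0 by ring. rewrite exp_0.
    replace (K * (1 - (1 - r * Wp z) * 1)) with ((K * r) * Wp z) by ring. rewrite Kr; ring. }
  assert (Fz : 0 < z -> Derive Wp z = - (K * a * th * exp (th * z))
     /\ forall y, 0 <= y -> G z <= G y).
  { intros Hz. destruct (I1 z Hz) as [Dz Cz].
    set (Dp := Derive Wp z).
    set (G1 := (- (r * Dp)) * exp (- th * z) + (1 - r * Wp z) * (- th * exp (- th * z))).
    assert (HG : derivable_pt_lim G z G1).
    { apply is_derive_Reals. unfold G, Gfun. fold th r. auto_derive. auto. unfold G1, Dp. change (Derive (fun x => Wp x) z) with (Derive Wp z). ring. }
    assert (CG : continuity_pt G z).
    { apply derivable_continuous_pt. exists G1. exact HG. }
    assert (Mn : forall y, 0 <= y -> G z <= G y) by (apply argmin_ok; auto).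
    split; auto.
    assert (G1 = 0).
    { pose proof (deriv_minimum G 0 (z+1) z (exist _ G1 HG)) as HH. simpl in HH.
      apply HH; try lra. intros x Hx _. apply Mn. lra. }
    unfold a. rewrite Gdef. unfold G1 in H.
    assert (E : exp (- th * z) * exp (th * z) = 1).
    { rewrite <- exp_plus. replace (- th * z + th * z) with 0 by ring. apply exp_0. }
    assert (Hp : 0 < exp (- th * z)) by apply exp_pos.
    assert (- (r * Dp) + (1 - r * Wp z) * - th = 0).
    { apply (Rmult_eq_reg_r (exp (- th * z))); [|lra]. rewrite Rmult_0_l. rewrite <- H. ring. }
    transitivity (K * r * Dp). rewrite Kr; ring.
    replace (- (K * ((1 - r * Wp z) * exp (- th * z)) * th * exp (th * z)))
      with (K * ((1 - r * Wp z) * - th) * (exp (- th * z) * exp (th * z))) by ring.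
    rewrite E. replace ((1 - r * Wp z) * - th) with (r * Dp) by lra. ring. }
  assert (DgN : forall y, is_derive gN y (- (K * a * th * exp (th * y)))).
  { intros y. unfold gN. auto_derive; auto. ring. }
  assert (DDgN : forall y, is_derive (fun y => - (K * a * th * exp (th * y))) y
                   (- (K * a * th * th * exp (th * y)))).
  { intros y. auto_derive; auto. ring. }
  assert (CgN1 : forall y, continuity_pt (fun y => - (K * a * th * exp (th * y))) y).
  { intros y. apply continuity_pt_filterlim.
    apply (ex_derive_continuous (fun y => - (K * a * th * exp (th * y)))). eexists; apply DDgN. }
  assert (CgN2 : forall y, continuity_pt (fun y => - (K * a * th * th * exp (th * y))) y).
  { intros y. apply continuity_pt_filterlim.
    apply (ex_derive_continuous (fun y => - (K * a * th * th * exp (th * y)))). auto_derive; auto. }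
  assert (DWr : forall y, z < y -> Derive W y = - (K * a * th * exp (th * y))).
  { intros y Hy. rewrite (deriv_open W gN z (y + 1)); [| intros; apply Wr; lra | lra].
    apply is_derive_unique; apply DgN. }
  assert (DWl : forall y, y < z -> Derive W y = Derive Wp y).
  { intros y Hy. apply (deriv_open W Wp (y - 1) z); [intros; apply Wl; lra | lra]. }
  split; [split|].
  - intros x Hx. destruct (Rtotal_order x z) as [Hlt|[Heq|Hgt]].
    + destruct (I1 x Hx). apply (ext_open_C1 W Wp (x - 1) z x); auto; [intros; apply Wl; lra | lra].
    + assert (Hz : 0 < z) by lra. rewrite Heq. destruct (Fz Hz) as [FD _].
      destruct (I1 z Hz) as [Dz Cz].
      assert (HD : derivable_pt_lim W z (Derive Wp z)).
      { apply (glue_deriv W Wp gN z 1); try lra.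
        - intros; apply Wl; lra.
        - intros y Hy. destruct (Req_dec y z) as [->|Hne]. rewrite Wl by lra; auto. apply Wr; lra.
        - apply is_derive_Reals. apply Derive_correct; auto.
        - rewrite FD. apply is_derive_Reals. apply DgN. }
      assert (DWz : Derive W z = Derive Wp z).
      { apply is_derive_unique. apply is_derive_Reals; auto. }
      split. exists (Derive Wp z). apply is_derive_Reals; auto.
      apply (glue_cont (Derive W) (Derive Wp) (fun y => - (K * a * th * exp (th * y))) z 1). all: try lra. all: try exact Cz. all: try apply CgN1.
      * intros y Hy. destruct (Req_dec y z) as [->|Hne]; auto. apply DWl; lra.
      * intros y Hy. destruct (Req_dec y z) as [->|Hne]. rewrite DWz; auto. apply DWr; lra.
    + destruct (exp_C1 K a th x). apply (ext_open_C1 W gN z (x + 1) x); auto; [intros; apply Wr; lra | lra].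
  - intros x Hx. destruct (Rle_lt_dec x z) as [Hle|Hgt].
    + destruct (I2 x Hx) as (d & A & B & s & Hd & Hp).
      exists d, A, B, s. split; auto. intros y Hy. rewrite Wl by lra. apply Hp; auto.
    + exists (x - z), K, (- K * a), th. split. lra. intros y Hy. rewrite Wr by lra. unfold gN. ring.
  - intros Hz. destruct (Fz Hz) as [FD FM]. destruct (I1 z Hz) as [Dz Cz].
    destruct (I2 z Hz) as (d & A & B & s & Hd & Hp).
    set (d' := Rmin d z). assert (Hd' : 0 < d') by (apply Rmin_pos; auto).
    assert (d' <= d) by apply Rmin_l. assert (d' <= z) by apply Rmin_r.
    set (g1 := fun y => A + B * exp (s * y)).
    assert (Dg1 : forall y, is_derive g1 y (B * s * exp (s * y))).
    { intros y. unfold g1. auto_derive; auto. ring. }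
    assert (DDg1 : forall y, is_derive (fun y => B * s * exp (s * y)) y (B * s * s * exp (s * y))).
    { intros y. auto_derive; auto. ring. }
    assert (Cg1 : forall y, continuity_pt (fun y => B * s * exp (s * y)) y).
    { intros y. apply continuity_pt_filterlim.
      apply (ex_derive_continuous (fun y => B * s * exp (s * y))). eexists; apply DDg1. }
    assert (Cg2 : forall y, continuity_pt (fun y => B * s * s * exp (s * y)) y).
    { intros y. apply continuity_pt_filterlim.
      apply (ex_derive_continuous (fun y => B * s * s * exp (s * y))). auto_derive; auto. }
    assert (DWL : forall y, z - d' < y < z -> Derive W y = B * s * exp (s * y)).
    { intros y Hy. rewrite (deriv_open W g1 (z - d') z); [| intros t Ht; rewrite Wl by lra; apply Hp; lra | lra].
      apply is_derive_unique; apply Dg1. }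
    assert (DDWL : forall y, z - d' < y < z -> is_derive (Derive W) y (B * s * s * exp (s * y))).
    { intros y Hy. apply (is_derive_ext_loc (fun y => B * s * exp (s * y))).
      apply (loc_open _ (z - d') z); auto. intros; symmetry; apply DWL; auto. apply DDg1. }
    assert (DDWR : forall y, z < y < z + 1 -> is_derive (Derive W) y (- (K * a * th * th * exp (th * y)))).
    { intros y Hy. apply (is_derive_ext_loc (fun y => - (K * a * th * exp (th * y)))).
      apply (loc_open _ z (z + 1)); auto. intros; symmetry; apply DWr; lra. apply DDgN. }
    exists (B * s * s * exp (s * z)), (- (K * a * th * th * exp (th * z))).
    split; [|split; [|split; [|split]]].
    + exists (mkposreal d' Hd'). simpl. intros x Hx. eexists; apply DDWL; auto.
    + exists (mkposreal 1 Rlt_0_1). simpl. intros x Hx. eexists; apply DDWR; auto.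
    + apply (left_filterlim _ (fun y => B * s * s * exp (s * y)) z d'); auto.
      intros y Hy. apply is_derive_unique, DDWL; auto.
    + apply (right_filterlim _ (fun y => - (K * a * th * th * exp (th * y))) z 1); auto. lra.
      intros y Hy. apply is_derive_unique, DDWR; auto.
    + set (u := fun y => 1 - r * (A + B * exp (s * y))).
      set (h := fun y => u y * exp (- th * y)).
      set (h1 := fun y => (- (r * B * s * exp (s * y))) * exp (- th * y) - th * u y * exp (- th * y)).
      set (h2 := fun y => (- (r * B * s * s * exp (s * y))) * exp (- th * y)
                 + 2 * th * r * B * s * exp (s * y) * exp (- th * y) + th * th * u y * exp (- th * y)).
      assert (Dh : forall y, derivable_pt_lim h y (h1 y)).
      { intros y. apply is_derive_Reals. unfold h, h1, u. auto_derive; auto. ring. }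
      assert (Dh1 : forall y, derivable_pt_lim h1 y (h2 y)).
      { intros y. apply is_derive_Reals. unfold h1, h2, u. auto_derive; auto. ring. }
      assert (Ch2 : continuity_pt h2 z).
      { apply continuity_pt_filterlim. apply (ex_derive_continuous h2). unfold h2, u. auto_derive; auto. }
      assert (Wpz : Wp z = A + B * exp (s * z)) by (apply Hp; lra).
      assert (Dpz : Derive Wp z = B * s * exp (s * z)).
      { apply (left_lim_eq (Derive Wp) (fun y => B * s * exp (s * y)) z d'); auto.
        intros y Hy. rewrite (deriv_open Wp g1 (z - d') z); [| intros t Ht; apply Hp; lra | lra].
        apply is_derive_unique; apply Dg1. }
      assert (EF : exp (- th * z) * exp (th * z) = 1).
      { rewrite <- exp_plus. replace (- th * z + th * z) with 0 by ring. apply exp_0. }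
      assert (Ha : a = u z * exp (- th * z)).
      { unfold a. rewrite Gdef. unfold u. rewrite Wpz. ring. }
      assert (Key : r * B * s * exp (s * z) = - th * u z).
      { replace (r * B * s * exp (s * z)) with (r * (B * s * exp (s * z))) by ring.
        rewrite <- Dpz, FD, Ha.
        replace (r * - (K * (u z * exp (- th * z)) * th * exp (th * z)))
          with (- (K * r) * th * u z * (exp (- th * z) * exp (th * z))) by ring.
        rewrite Kr, EF. ring. }
      assert (H1z : h1 z = 0).
      { unfold h1. replace (- (r * B * s * exp (s * z))) with (- (r * B * s * exp (s * z))) by ring.
        rewrite Key. ring. }
      assert (Hm : forall y, z - d' < y < z -> h z <= h y).
      { intros y Hy. unfold h, u. rewrite <- Wpz, <- (Hp y) by lra. rewrite <- !Gdef. apply FM. lra. }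
      pose proof (second_order_left h h1 h2 z d' Hd' Dh Dh1 Ch2 H1z Hm) as H2.
      unfold h2 in H2.
      assert (HE : 0 < exp (- th * z)) by apply exp_pos.
      assert (Hb : 0 <= - (r * B * s * s * exp (s * z)) + 2 * th * (r * B * s * exp (s * z)) + th * th * u z).
      { apply (Rmult_le_reg_r (exp (- th * z))); auto. rewrite Rmult_0_l.
        eapply Rle_trans; [exact H2|]. right; ring. }
      rewrite Key in Hb. rewrite Ha.
      replace (- (K * (u z * exp (- th * z)) * th * th * exp (th * z)))
        with (- (K * th * th * u z) * (exp (- th * z) * exp (th * z))) by ring.
      rewrite EF.
      assert (HF : 0 <= K * (- (r * B * s * s * exp (s * z)) - th * th * u z)).
      { apply Rmult_le_pos; lra. }
      replace (K * (- (r * B * s * s * exp (s * z)) - th * th * u z))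
        with (- (K * r) * B * s * s * exp (s * z) - K * th * th * u z) in HF by ring.
      rewrite Kr in HF. lra.
Qed.

Lemma base mu sigma q Lambda c : Inv (Wz mu sigma q Lambda c 0).
Proof.
  simpl. set (t := theta1 mu sigma q 0). split.
  - intros x Hx. split. auto_derive; auto.
    apply (continuity_pt_ext (fun y => - (Lambda / q * t * exp (t * y)))).
    + intros y. symmetry. apply is_derive_unique. auto_derive; auto. ring.
    + apply continuity_pt_filterlim. apply (ex_derive_continuous (fun y => - (Lambda / q * t * exp (t * y)))). auto_derive; auto.
  - intros x Hx. exists 1, (Lambda / q), (- (Lambda / q)), t. split. lra. intros; ring.
Qed.

Theorem mainTheorem13 (mu sigma q Lambda : R) (n : nat) (c : nat -> R) :
  0 < sigma -> 0 < q -> 0 < Lambda ->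
  c 0%nat = 0 -> (forall k, (k < n)%nat -> c k < c (S k)) ->
  forall i : nat, (1 <= i <= n)%nat ->
    let W := Wz mu sigma q Lambda c i in
    let z := zstar mu sigma q Lambda c i in
    (forall x, 0 < x -> ex_derive W x /\ continuous (Derive W) x) /\
    (0 < z ->
      exists lminus lplus : R,
        (exists del : posreal, forall x, z - del < x < z -> ex_derive (Derive W) x) /\
        (exists del : posreal, forall x, z < x < z + del -> ex_derive (Derive W) x) /\
        filterlim (fun x => Derive (Derive W) x) (at_left z) (locally lminus) /\
        filterlim (fun x => Derive (Derive W) x) (at_right z) (locally lplus) /\
        lminus <= lplus).
Proof.
  intros Hs Hq HL H0 Hc i Hi W z.
  assert (Hnn : forall k, (k <= n)%nat -> 0 <= c k).
  { induction k; intros Hk. lra. pose proof (Hc k ltac:(lia)). pose proof (IHk ltac:(lia)). lra. }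
  assert (HInv : forall k, (k <= n)%nat -> Inv (Wz mu sigma q Lambda c k)).
  { induction k; intros Hk. apply base.
    pose proof (Hnn (S k) Hk).
    destruct (step mu sigma q Lambda (Wz mu sigma q Lambda c k) (c (S k)) Hq ltac:(lra) (IHk ltac:(lia))) as [HI _].
    exact HI. }
  destruct i as [|j]. lia.
  pose proof (Hnn (S j) (proj2 Hi)).
  destruct (step mu sigma q Lambda (Wz mu sigma q Lambda c j) (c (S j)) Hq ltac:(lra) (HInv j ltac:(lia))) as [[HI1 _] H2].
  split.
  - intros x Hx. destruct (HI1 x Hx) as [D C]. split. exact D. apply continuity_pt_filterlim. exact C.
  - exact H2.
Qed.
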